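(* Let $K, L, N$ be positive integers. Consider the $K$-user SIMO broadcast channel with a single transmit antenna, $N$ antennas at each receiver, symbol extension factor $L$, and no CSIT, as described in the context. Then the maximum achievable SpAC is $\frac{L-K+1}{L}$.
   Context: Model: one single-antenna transmitter and $K$ receivers with $N$ antennas each. Over $L$ channel uses, receiver $i$ observes $\mathbf{y}_i=\mathbf{H}_{i,i}\sum_{j=1}^K\mathbf{Q}_j\mathbf{x}_j+\mathbf{n}_i\in\mathbb{C}^{NL}$, where $\mathbf{H}_{i,i}\in\mathbb{C}^{NL\times L}$ is block diagonal with $L$ diagonal blocks $\mathbf{h}_{i,i}(t)\in\mathbb{C}^{N\times 1}$, $\mathbf{x}_j\in\mathbb{C}^d$ is the finite-alphabet symbol vector for receiver $j$, $\mathbf{Q}_j\in\mathbb{C}^{L\times d}$ its precoder (rank $d$), and $\mathbf{n}_i$ Gaussian noise. No CSIT: the precoders are fixed and independent of the channel coefficients. At receiver $i$, the desired subspace is $\mathcal{S}_i=\mathrm{span}(\mathbf{H}_{i,i}\mathbf{Q}_i)$ and the interference subspace is $\mathcal{I}_i=\sum_{j\ne i}\mathrm{span}(\mathbf{H}_{i,i}\mathbf{Q}_j)$. A value $d$ is achievable if there exist channel-independent precoders such that, for almost every realization of the channel coefficients, $\mathcal{S}_i\not\subseteq\mathcal{I}_i$ for every receiver $i$. The SpAC is $d/L$, and the maximum achievable SpAC is the maximum of $d/L$ over achievable $d$. *)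

(* Defs.v *)
From HB Require Import structures.
From mathcomp Require Import all_boot all_order all_algebra.
From mathcomp Require Import reals.
From mathcomp Require Import complex.
Set Implicit Arguments.
Unset Strict Implicit.
Unset Printing Implicit Defensive.
Import Order.TTheory GRing.Theory Num.Theory.
Local Open Scope ring_scope.

(* Lebesgue-null subsets of C^I (I a finite index set), C^I identified with
   R^(2|I|) via real and imaginary parts: for every e > 0 the set can be
   covered by countably many closed boxes of total volume at most e. *)
Definition cnull (R : realType) (I : finType) (A : (I -> R[i]) -> Prop) : Prop :=
  forall e : R, 0 < e ->
  exists a b c d : nat -> I -> R,
    (forall n i, a n i <= b n i /\ c n i <= d n i) /\
    (forall g, A g -> exists n, forall i,
        (a n i <= complex.Re (g i) <= b n i) && (c n i <= complex.Im (g i) <= d n i)) /\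
    (forall m, \sum_(n < m) \prod_(i : I) ((b n i - a n i) * (d n i - c n i)) <= e).

(* Block-diagonal channel matrix H_{i,i} in C^{NL x L}: its t-th column is
   zero except for the block of rows t*N, ..., t*N + N - 1, which holds
   h(t) in C^N (row index t*N + n  <->  (t, n), via mxvec). *)
Definition chan_mx (R : realType) (L N : nat) (h : 'I_L -> 'cV[R[i]]_N)
  : 'M[R[i]]_(L * N, L) :=
  (\matrix_(c < L) mxvec (\matrix_(t < L, n < N) ((t == c)%:R * h c n 0)))^T.

(* The channel realization: coefficients g (i, t, n) = (h_{i,i}(t))_n. *)
Definition chan_of (R : realType) (K L N : nat)
  (g : 'I_K * 'I_L * 'I_N -> R[i]) (i : 'I_K) (t : 'I_L) : 'cV[R[i]]_N :=
  \col_(n < N) g (i, t, n).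

(* Column space of H Q_i is contained in the sum of the column spaces of
   H Q_j, j <> i (column spaces = row spaces of the transposes). *)
Definition desired_in_interf (R : realType) (K L N d : nat)
  (Q : 'I_K -> 'M[R[i]]_(L, d)) (g : 'I_K * 'I_L * 'I_N -> R[i]) (i : 'I_K)
  : bool :=
  let H := chan_mx (chan_of g i) in
  ((H *m Q i)^T <= \sum_(j | j != i) <<(H *m Q j)^T>>)%MS.

Definition achievable (R : realType) (K L N d : nat) : Prop :=
  exists Q : 'I_K -> 'M[R[i]]_(L, d),
    (forall j, \rank (Q j) = d) /\
    cnull (fun g : 'I_K * 'I_L * 'I_N -> R[i] =>
             exists i, desired_in_interf Q g i).

(* Main.v *)
Require Import Defs.
From HB Require Import structures.
From mathcomp Require Import all_boot all_order all_algebra.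
From mathcomp Require Import reals.
From mathcomp Require Import complex.
From mathcomp Require Import classical_sets functions boolp ereal sequences measure lebesgue_measure lebesgue_integral numfun measurable_realfun normedtype topology lra zify.
Import Order.TTheory GRing.Theory Num.Theory.
Local Open Scope ring_scope.
Section Cube.
Context (R : realType).

Definition bvol k (lo hi : 'I_k -> R) : R := \prod_(j < k) Num.max 0 (hi j - lo j).

Arguments bvol {k}.
Lemma bvol_ge0 k (lo hi : 'I_k -> R) : 0 <= bvol lo hi.
Proof. by apply: prodr_ge0 => j _; rewrite le_max lexx. Qed.
Local Open Scope ereal_scope.

Lemma series_ge_term (u : (\bar R)^nat) n : (forall m, 0 <= u m) ->
  u n <= \sum_(m <oo) u m.
Proof.
move=> u0; apply: le_trans (nneseries_lim_ge n.+1 _) => //.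
rewrite big_nat_recr //= leeDr //.
by apply: sume_ge0 => i _.
Qed.

Lemma cube_cover k : forall (P : nat -> bool) (lo hi : nat -> 'I_k -> R),
  (forall x : 'I_k -> R, (forall j, 0 <= x j <= 1)%R ->
     exists n, P n /\ forall j, (lo n j <= x j <= hi n j)%R) ->
  1 <= \sum_(n <oo) ((P n)%:R * bvol (lo n) (hi n))%:E.
Proof.
elim: k => [|k IH] P lo hi cov.
  have [|n [Pn _]] := cov (fun _ => 0%R); first by case.
  apply: (le_trans _ (series_ge_term _ n _)).
    by rewrite Pn /bvol big_ord0 mul1r.
  by move=> m; rewrite lee_fin mulr_ge0 ?bvol_ge0.
pose mx := @ord_max k.
pose lo' n (j : 'I_k) := lo n (lift mx j).
pose hi' n (j : 'I_k) := hi n (lift mx j).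
pose c n := ((P n)%:R * bvol (lo' n) (hi' n))%R.
have c0 n : (0 <= c n)%R by rewrite mulr_ge0 ?bvol_ge0.
pose A n : set R := `[lo n mx, hi n mx]%classic.
pose F n x := (c n * \1_(A n) x)%:E.
have F0 n x : 0 <= F n x by rewrite lee_fin mulr_ge0 // indicE.
pose D : set R := `[0%R, 1%R]%classic.
have mD : measurable D := measurable_itv _.
have mF n : measurable_fun D (F n).
  apply: (proj2 (measurable_EFinP _ (fun x => c n * \1_(A n) x)%R)).
  apply: (@measurable_funM _ _ _ _ (cst (c n)) (\1_(A n))); first exact: measurable_cst.
  apply: measurable_indic; exact: measurable_itv.
have key x : D x -> 1 <= \sum_(n <oo) F n x.
  move=> Dx.
  have := IH (fun n => P n && (lo n mx <= x <= hi n mx)%R) lo' hi'.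
  move=> /(_ _) H; apply: le_trans (H _) _.
    move=> y y01.
    pose z (j : 'I_k.+1) := if unlift mx j is Some j' then y j' else x.
    have [|n [Pn Hn]] := cov z.
      move=> j; rewrite /z; case: unliftP => [j'|] _; first exact: y01.
      by move: Dx; rewrite /D /= in_itv /=.
    exists n; split.
      by rewrite Pn /=; have := Hn mx; rewrite /z unlift_none.
    by move=> j; have := Hn (lift mx j); rewrite /z liftK.
  apply: lee_nneseries => n _.
    by rewrite lee_fin mulr_ge0 ?bvol_ge0.
  rewrite /F /c /A indicE /=.
  have -> : (x \in `[lo n mx, hi n mx]%classic) = (lo n mx <= x <= hi n mx)%R.
    by apply/idP/idP; rewrite inE /= in_itv.
  by case: (P n); case: (lo n mx <= x <= hi n mx)%R; rewrite /= ?mul0r ?mul1r ?mulr1 ?mulr0.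
have int1 : \int[lebesgue_measure]_(x in D) (cst 1 x) = 1.
  rewrite integral_cst // mul1e /D. have h := @lebesgue_measure_itv R `[0%R, 1%R]. rewrite /= lte01 oppr0 adde0 in h. exact: h.
apply: (@le_trans _ _ (\int[lebesgue_measure]_(x in D) (\sum_(n <oo) F n x))).
  rewrite -int1; apply: ge0_le_integral => //.
  - exact: (@ge0_emeasurable_sum _ _ _ D F xpredT (fun n x _ _ => F0 n x) (fun n _ => mF n)).
rewrite integral_nneseries //.
apply: lee_nneseries => n _.
  by move=> _; apply: integral_ge0 => x _.
rewrite (@integralZl_indic _ _ _ lebesgue_measure D mD (fun _ => A n) (c n)); last 2 first.
- by move=> /(lt_le_trans)/(_ (c0 n)); rewrite ltxx.
- exact: measurable_itv.
rewrite integral_indic //; last exact: measurable_itv.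
have hb : bvol (lo n) (hi n) =
    (bvol (lo' n) (hi' n) * Num.max 0 (hi n mx - lo n mx))%R.
  rewrite /bvol big_ord_recr /=; congr (_ * _)%R.
  apply: eq_bigr => j _; congr ((Num.max 0 (hi n _ - lo n _))%R);
  by apply: val_inj; rewrite /= /bump leqNgt ltn_ord.
rewrite hb mulrA (EFinM (_ * _)%R (Num.max _ _)). apply: lee_pmul; rewrite ?lee_fin //.
have mA : measurable (A n) := measurable_itv _.
have h := @lebesgue_measure_itv R `[lo n mx, hi n mx].
rewrite /= in h.
have h2 : lebesgue_measure (A n) <= (Num.max 0 (hi n mx - lo n mx))%:E.
  rewrite /A h; case: ifPn => _; last by rewrite lee_fin le_max lexx.
  by rewrite -EFinD lee_fin le_max lexx orbT.
have h3 := measureIl lebesgue_measure mA mD.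
apply: (le_trans h3).
exact: (le_trans h2).
Qed.

Lemma series_le_of_partial (u : (\bar R)^nat) (x : \bar R) :
  (forall m, 0 <= u m) -> (forall m, \sum_(n < m) u n <= x) ->
  \sum_(n <oo) u n <= x.
Proof.
move=> u0 hu; apply: lime_le.
  by apply: is_cvg_nneseries => n _ _; exact: u0.
by apply: nearW => m; rewrite big_mkord; exact: hu.
Qed.

Lemma not_null_all (I : finType) : ~ cnull (fun _ : I -> R[i] => True).
Proof.
move=> /(_ (1/2)%R) []; first by rewrite divr_gt0.
move=> a [b [c [d [ab [cov hs]]]]].
pose m := #|I|.
pose lo n (j : 'I_(m + m)) := match fintype.split j with inl p => a n (enum_val p) | inr p => c n (enum_val p) end.
pose hi n (j : 'I_(m + m)) := match fintype.split j with inl p => b n (enum_val p) | inr p => d n (enum_val p) end.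
have bv n : bvol (lo n) (hi n) = (\prod_(i : I) ((b n i - a n i) * (d n i - c n i)))%R.
  have sl (i : 'I_m) : fintype.split (lshift m i) = inl i := unsplitK (inl i).
  have sr (i : 'I_m) : fintype.split (rshift m i) = inr i := unsplitK (inr i).
  rewrite /bvol big_split_ord /= /lo /hi.
  under eq_bigr do rewrite sl max_r ?subr_ge0 ?(ab n _).1 //.
  under [X in (_ * X)%R]eq_bigr do rewrite sr max_r ?subr_ge0 ?(ab n _).2 //.
  rewrite -big_split /= -(big_enum_val (A := I) (fun i => (b n i - a n i) * (d n i - c n i))%R).
  by apply: eq_bigl => i; rewrite inE.
suff cv : forall x : 'I_(m + m) -> R, (forall j, 0 <= x j <= 1)%R ->
    exists n, xpredT n /\ forall j, (lo n j <= x j <= hi n j)%R.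
  have H := @cube_cover (m + m) xpredT lo hi cv.
  have : \sum_(n <oo) ((xpredT n)%:R * bvol (lo n) (hi n))%:E <= (1/2)%:E.
    apply: series_le_of_partial => [k|k]; first by rewrite lee_fin mulr_ge0 ?bvol_ge0.
    rewrite sumEFin lee_fin; under eq_bigr do rewrite /= mul1r bv.
    exact: hs.
  move=> /(le_trans H); rewrite lee_fin => h.
  move: h; lra.
  move=> x x01.
  pose g (i : I) : R[i] := Complex (x (lshift m (enum_rank i))) (x (rshift m (enum_rank i))).
  have [n hn] := cov g Logic.I.
  exists n; split => // j.
  rewrite /lo /hi -(splitK j); case: (fintype.split j) => p; rewrite unsplitK /=;
    have := hn (enum_val p); rewrite /g /= enum_valK; by case/andP.
Qed.
End Cube.

Lemma chain (F : fieldType) (K L d : nat) (Q : 'I_K -> 'M[F]_(L, d)) :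
  (0 < K)%N -> (forall j, \rank (Q j) = d) ->
  (forall i, ~~ ((Q i)^T <= \sum_(j | j != i) <<(Q j)^T>>)%MS) -> (d + K - 1 <= L)%N.
Proof.
move=> K0 rQ nb.
pose S k := (\sum_(j : 'I_K | (j < k)%N) <<(Q j)^T>>)%MS.
have QS (j : 'I_K) k : (j < k)%N -> ((Q j)^T <= S k)%MS.
  by move=> jk; apply: (sumsmx_sup j) => //; rewrite genmxE.
have key : forall k, (0 < k <= K)%N -> (d + k - 1 <= \rank (S k))%N.
  elim=> [//|k IH] /andP[_ kK].
  have k0 : (k < K)%N by [].
  have [k00|kpos] := posnP k.
    subst k; rewrite addn1 subn1 /= -(rQ (Ordinal k0)) -mxrank_tr.
    exact: mxrankS (QS _ 1%N _).
  have := IH; rewrite kpos (ltnW k0) => /(_ isT) IHk.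
  have sub : (S k <= S k.+1)%MS.
    by apply/sumsmx_subP => j jk; apply: (sumsmx_sup j); rewrite ?genmxE // ltnS ltnW.
  have nsub : ~~ (S k.+1 <= S k)%MS.
    apply/negP => h; apply: (negP (nb (Ordinal k0))).
    apply: submx_trans (submx_trans (QS (Ordinal k0) k.+1 (ltnSn k)) h) _.
    apply/sumsmx_subP => j jk; apply: (sumsmx_sup j) => //.
    by rewrite -val_eqE /= neq_ltn jk.
  have lt : (\rank (S k) < \rank (S k.+1))%N.
    by apply: rank_ltmx; rewrite ltmxE sub nsub.
  move: IHk lt; set a := \rank (S k); set b := \rank (S k.+1); lia.
have := key K; rewrite K0 leqnn => /(_ isT) h.
exact: leq_trans h (rank_leq_col _).
Qed.

Lemma bad_of (R : realType) (K L N d : nat) (Q : 'I_K -> 'M[R[i]]_(L, d))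
  (g : 'I_K * 'I_L * 'I_N -> R[i]) (i : 'I_K) :
  ((Q i)^T <= \sum_(j | j != i) <<(Q j)^T>>)%MS -> desired_in_interf Q g i.
Proof.
move=> h; rewrite /desired_in_interf /=.
set H := chan_mx _.
rewrite trmx_mul.
apply: submx_trans (submxMr H^T h) _.
rewrite sumsmxMr_gen; apply: sumsmxS => j _.
by rewrite !genmxE trmx_mul (eqmxMr _ (genmxE _)).
Qed.

Lemma chan_mxE (R : realType) (L N : nat) (h : 'I_L -> 'cV[R[i]]_N) t n t' :
  chan_mx h (mxvec_index t n) t' = (t == t')%:R * h t' n 0.
Proof.
rewrite /chan_mx mxE.
by rewrite !mxE mxvecE mxE.
Qed.

Definition fQ (d j c : nat) : nat := if (c < d.-1)%N then c else (d.-1 + j)%N.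
Definition Q0 (R : realType) (K L d : nat) (j : 'I_K) : 'M[R[i]]_(L, d) :=
  \matrix_(t, c) ((t : nat) == fQ d j c)%:R.
Arguments Q0 R {K} L d j.

Lemma HQ_entry (R : realType) (K L N d : nat) (h : 'I_L -> 'cV[R[i]]_N) (j : 'I_K) t0 n c :
  (chan_mx h *m Q0 R L d j) (mxvec_index t0 n) c = h t0 n 0 * ((t0 : nat) == fQ d j c)%:R.
Proof.
rewrite mxE (bigD1 t0) //= big1 ?addr0.
  by rewrite chan_mxE eqxx mul1r mxE.
by move=> t ne; rewrite chan_mxE eq_sym (negbTE ne) !mul0r.
Qed.

Lemma good (R : realType) (K L N d : nat) (g : 'I_K * 'I_L * 'I_N -> R[i])
  (i : 'I_K) (t0 : 'I_L) (n0 : 'I_N) (hd : (0 < d)%N) :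
  val t0 = (d.-1 + i)%N -> g (i, t0, n0) != 0 -> ~~ desired_in_interf (Q0 R L d) g i.
Proof.
move=> ht gnz; apply/negP => h.
pose v : 'M[R[i]]_(L * N, 1) := delta_mx (mxvec_index t0 n0) 0.
have key : forall j, j != i -> ((chan_mx (chan_of g i) *m Q0 R L d j)^T <= kermx v)%MS.
  move=> j ji; apply/sub_kermxP; apply/matrixP => c z.
  rewrite ord1 -colE mxE mxE HQ_entry mxE.
  suff -> : ((t0 : nat) == fQ d j c) = false by rewrite mulr0 mxE.
  apply/negbTE; rewrite /fQ ht; case: ifP => /= H.
    by apply/eqP => E; move: H; rewrite -E; lia.
  by rewrite eqn_add2l val_eqE eq_sym.
have : ((chan_mx (chan_of g i) *m Q0 R L d i)^T <= kermx v)%MS.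
  apply: submx_trans h _.
  by apply/sumsmx_subP => j ji; rewrite genmxE; exact: key.
have hd' : (d.-1 < d)%N by rewrite ltn_predL.
move/sub_kermxP => /matrixP /(_ (Ordinal hd') 0).
rewrite -colE mxE mxE HQ_entry !mxE /fQ /= ltnn ht eqxx mulr1.
by move/eqP: gnz.
Qed.

Lemma rank_Q0 (R : realType) (K L d : nat) (j : 'I_K) :
  (d.-1 + j < L)%N -> \rank (Q0 R L d j) = d.
Proof.
move=> hL.
have fL (c : 'I_d) : (fQ d j c < L)%N.
  rewrite /fQ; case: ifP => H; move: (ltn_ord c) H hL; rewrite -!subn1; lia.
have finj (c c' : 'I_d) : (fQ d j c == fQ d j c') = ((c : nat) == c').
  rewrite /fQ; case: ifP => H; case: ifP => H';
  apply/idP/idP => /eqP E; apply/eqP; move: (ltn_ord c) (ltn_ord c') H H' E;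
  rewrite -!subn1; lia.
have e : (Q0 R L d j)^T *m Q0 R L d j = 1%:M.
  apply/matrixP => c c'; rewrite !mxE (bigD1 (Ordinal (fL c))) //= big1 ?addr0.
    by rewrite !mxE eqxx mul1r finj val_eqE.
  move=> t ne; rewrite !mxE; case: eqP => E; last by rewrite mul0r.
  by move: ne; rewrite -val_eqE /= E eqxx.
apply/eqP; rewrite eqn_leq rank_leq_col /=.
by rewrite -{1}(@mxrank1 R[i] d) -e mxrankM_maxr.
Qed.

Lemma hyper_null (R : realType) (I T0 : finType) (pi : T0 -> I) (p0 : T0) :
  cnull (fun g : I -> R[i] => exists p, g (pi p) = 0).
Proof.
move=> e e0.
pose M := #|T0|.
have Mpos : (0 < M)%N by rewrite /M; apply/card_gt0P; exists p0.
pose target (n : nat) : T0 := enum_val (Ordinal (ltn_pmod n Mpos)).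
pose s (n : nat) : R := (n %/ M)%:R.
pose a n q : R := if q == pi (target n) then 0 else - s n.
pose b n q : R := if q == pi (target n) then 0 else s n.
exists a, b, a, b; split; [|split].
- move=> n q; rewrite /a /b; case: ifP => _ //.
  have s0 : 0 <= s n by rewrite ler0n.
  by split; lra.
- move=> g [p gp].
  pose B := \sum_q (`|complex.Re (g q)| + `|complex.Im (g q)|).
  have Bq q : `|complex.Re (g q)| + `|complex.Im (g q)| <= B.
    rewrite /B (bigD1 q) //= lerDl.
    by apply: sumr_ge0 => i _; rewrite addr_ge0.
  have B0 : 0 <= B by apply: sumr_ge0 => i _; rewrite addr_ge0.
  pose s0 := Num.Def.archi_bound B.
  have hs0 := archi_boundP B0.
  exists (s0 * M + enum_rank p)%N.
  have ht : target (s0 * M + enum_rank p)%N = p.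
    rewrite /target.
    have -> : Ordinal (ltn_pmod (s0 * M + enum_rank p)%N Mpos) = enum_rank p.
      by apply: val_inj => /=; rewrite modnMDl modn_small.
    exact: enum_rankK.
  have hs : s (s0 * M + enum_rank p)%N = s0%:R.
    by rewrite /s divnMDl // divn_small // addn0.
  move=> q; rewrite /a /b ht hs.
  case: eqP => [->|_]; first by rewrite gp /= lexx.
  have := Bq q; move: hs0; rewrite -/s0 => h1 h2.
  have nx := normr_ge0 (complex.Re (g q)).
  have ny := normr_ge0 (complex.Im (g q)).
  have hx : `|complex.Re (g q)| <= s0%:R by lra.
  have hy : `|complex.Im (g q)| <= s0%:R by lra.
  by rewrite -!ler_norml hx hy.
- move=> m; rewrite big1 ?ltW // => n _.
  by rewrite (bigD1 (pi (target n))) //= /a /b eqxx subrr mul0r mul0r.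
Qed.

Lemma cnull_sub (R : realType) (I : finType) (A B : (I -> R[i]) -> Prop) :
  (forall g, A g -> B g) -> cnull B -> cnull A.
Proof.
move=> AB nB e e0; have [a [b [c [d [h1 [h2 h3]]]]]] := nB e e0.
exists a, b, c, d; split => //; split => // g /AB; exact: h2.
Qed.

Theorem corollary2 (R : realType) (K L N : nat) :
  (0 < K)%N -> (0 < L)%N -> (0 < N)%N -> (K <= L)%N ->
  (exists d : nat, achievable R K L N d /\
     d%:R / L%:R = ((L - K + 1)%N)%:R / L%:R :> R) /\
  (forall d : nat, achievable R K L N d ->
     d%:R / L%:R <= ((L - K + 1)%N)%:R / L%:R :> R).
Proof.
move=> K0 L0 N0 KL; split.
  exists (L - K + 1)%N; split => //.
  set d0 := (L - K + 1)%N.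
  have hj (j : 'I_K) : (d0.-1 + j < L)%N by rewrite /d0 addn1 /=; move: (ltn_ord j); lia.
  exists (Q0 R L d0); split; first by move=> j; exact: rank_Q0.
  pose n0 : 'I_N := Ordinal N0.
  apply: (@cnull_sub R _ _ (fun g => exists p : 'I_K * 'I_L, g (p.1, p.2, n0) = 0)).
    move=> g [i bad]; exists (i, Ordinal (hj i)) => /=.
    apply/eqP; apply: contraT => gnz.
    have := @good R K L N d0 g i (Ordinal (hj i)) n0 _ erefl gnz.
    by rewrite bad; apply; rewrite /d0 addn1.
  exact: (@hyper_null R _ _ (fun p : 'I_K * 'I_L => (p.1, p.2, n0)) (Ordinal K0, Ordinal L0)).
move=> d [Q [rQ nQ]].
rewrite ler_pM2r ?invr_gt0 ?ltr0n // ler_nat.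
case: (boolP [exists i, ((Q i)^T <= \sum_(j | j != i) <<(Q j)^T>>)%MS]).
  move=> /existsP [i hi]; exfalso.
  have nn := @not_null_all R ('I_K * 'I_L * 'I_N)%type; apply: nn.
  apply: cnull_sub nQ => g _; exists i; exact: bad_of.
rewrite negb_exists => /forallP nb.
have := @chain _ K L d Q K0 rQ nb; lia.
Qed.
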